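(* For every positive integer $n$, $N'(n,1,n-1)=n$.
   Context: $\mathbb{Z}_4$ is the ring of integers modulo $4$; a $\mathbb{Z}_4$-code of length $n$ is a $\mathbb{Z}_4$-submodule of $\mathbb{Z}_4^n$. Two codes are equivalent if one is obtained from the other by permuting coordinates and changing the signs of some coordinates. Every $\mathbb{Z}_4$-code is permutation-equivalent to one with generator matrix $\begin{pmatrix} I_{k_1} & A & B \\ O & 2I_{k_2} & 2D\end{pmatrix}$ with $A,D$ $(0,1)$-matrices and $B$ a $\mathbb{Z}_4$-matrix; the code then has type $4^{k_1}2^{k_2}$. The trivial extension of a code $C$ of length $n-1$ is $\{(c,0)\mid c\in C\}$ (the only code of length $0$ is the zero code). $N'(n,k_1,k_2)$ denotes the number of equivalence classes of $\mathbb{Z}_4$-codes of length $n$ and type $4^{k_1}2^{k_2}$ that are not equivalent to the trivial extension of any $\mathbb{Z}_4$-code of length $n-1$. *)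

(* Defs.v *)
From HB Require Import structures.
From mathcomp Require Import all_boot all_order all_algebra all_fingroup.
Set Implicit Arguments. Unset Strict Implicit. Unset Printing Implicit Defensive.
Import GRing.Theory.
Local Open Scope ring_scope.

Notation Z4 := 'Z_4.

Definition is_code (n : nat) (C : {set 'rV[Z4]_n}) : bool :=
  [&& (0 : 'rV[Z4]_n) \in C,
      [forall x in C, forall y in C, x + y \in C]
    & [forall a : Z4, forall x in C, a *: x \in C]].

(* Type 4^k1 2^k2: C is isomorphic (as abelian group) to Z4^k1 x Z2^k2,
   i.e. |C| = 4^k1 2^k2 and the 2-torsion of C has 2^(k1+k2) elements. *)
Definition two_torsion (n : nat) (C : {set 'rV[Z4]_n}) : {set 'rV[Z4]_n} :=
  [set x in C | x *+ 2 == 0].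

Definition has_type (n : nat) (C : {set 'rV[Z4]_n}) (k1 k2 : nat) : bool :=
  (#|C| == 4 ^ k1 * 2 ^ k2)%N &&
  (#|two_torsion C| == 2 ^ (k1 + k2))%N.

Definition code_map (n : nat) (s : 'S_n) (e : {ffun 'I_n -> bool})
  (c : 'rV[Z4]_n) : 'rV[Z4]_n :=
  \row_i (if e i then - c 0 (s i) else c 0 (s i)).

Definition code_equiv (n : nat) (C D : {set 'rV[Z4]_n}) : bool :=
  [exists s : 'S_n, exists e : {ffun 'I_n -> bool},
     D == [set code_map s e c | c in C]].

(* (c, 0) : append a zero coordinate to a word of length n-1. *)
Definition ext_word (n : nat) (c : 'rV[Z4]_(n.-1)) : 'rV[Z4]_n :=
  \row_(i < n) (match @insub nat (fun k => (k < n.-1)%N) 'I_(n.-1) (val i) with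
                | Some j => c 0 j
                | None => 0
                end).

Definition triv_ext (n : nat) (D : {set 'rV[Z4]_(n.-1)}) : {set 'rV[Z4]_n} :=
  [set @ext_word n c | c in D].

Definition Nprime (n k1 k2 : nat) : nat :=
  #|[set [set D | code_equiv C D] | C in
      [set C : {set 'rV[Z4]_n} |
        [&& is_code C, has_type C k1 k2 &
            ~~ [exists D : {set 'rV[Z4]_(n.-1)},
                  is_code D && code_equiv C (@triv_ext n D)]]]]|.

(* Main.v *)
Require Import Defs.
From mathcomp Require Import all_boot all_order all_algebra all_fingroup.
Set Implicit Arguments. Unset Strict Implicit. Unset Printing Implicit Defensive.
Import GRing.Theory.
Local Open Scope ring_scope.
Definition par (x : Z4) : bool := odd (val x).
Lemma Z4_cases (P : Z4 -> Prop) : P 0 -> P 1 -> P 2 -> P (-1) -> forall x, P x.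
Proof.
move=> H0 H1 H2 H3 [[|[|[|[|m]]]] Hm].
- by have -> : Ordinal Hm = 0 by apply/val_inj.
- by have -> : Ordinal Hm = 1 by apply/val_inj.
- by have -> : Ordinal Hm = 2 by apply/val_inj.
- by have -> : Ordinal Hm = -1 by apply/val_inj.
- by [].
Qed.
Lemma parD (x y : Z4) : par (x + y) = par x (+) par y.
Proof. by elim/Z4_cases: x; elim/Z4_cases: y. Qed.
Lemma parM (x y : Z4) : par (x * y) = par x && par y.
Proof. by elim/Z4_cases: x; elim/Z4_cases: y. Qed.
Lemma parN (x : Z4) : par (- x) = par x.
Proof. by elim/Z4_cases: x. Qed.
Lemma par2 (x : Z4) : (x *+ 2 == 0) = ~~ par x.
Proof. by elim/Z4_cases: x. Qed.
Lemma par_eq (x : Z4) : ~~ par x -> x = (if x == 2 then 2 else 0).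
Proof. by elim/Z4_cases: x. Qed.
Definition pat n (x : 'rV[Z4]_n) : {set 'I_n} := [set i | par (x 0 i)].
Definition Ev n : {set 'rV[Z4]_n} := [set x : 'rV[Z4]_n | pat x == set0].
Definition CS n (A : {set 'I_n}) : {set 'rV[Z4]_n} :=
  [set x : 'rV[Z4]_n | (pat x == set0) || (pat x == A)].

Lemma patD n (x y : 'rV[Z4]_n) i : (i \in pat (x + y)) = (i \in pat x) (+) (i \in pat y).
Proof. by rewrite !inE mxE parD. Qed.
Lemma patN n (x : 'rV[Z4]_n) : pat (- x) = pat x.
Proof. by apply/setP=> i; rewrite !inE mxE parN. Qed.
Lemma patZ n (a : Z4) (x : 'rV[Z4]_n) : pat (a *: x) = if par a then pat x else set0.
Proof. by apply/setP=> i; rewrite !inE mxE parM; case: (par a); rewrite ?inE. Qed.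
Lemma pat0 n : pat (0 : 'rV[Z4]_n) = set0.
Proof. by apply/setP=> i; rewrite !inE mxE. Qed.

Lemma card_Ev n : #|Ev n| = (2 ^ n)%N.
Proof.
pose f (b : 'rV[bool]_n) : 'rV[Z4]_n := \row_i (if b 0 i then 2 else 0).
have finj : injective f.
  move=> b c /rowP H; apply/rowP=> i; move: (H i); rewrite !mxE.
  by case: (b 0 i); case: (c 0 i).
have -> : Ev n = f @: setT.
  apply/setP=> x; rewrite !inE; apply/idP/imsetP.
  - move=> /eqP Hx; exists (\row_i (x 0 i == 2)) => //.
    apply/rowP=> i; rewrite !mxE.
    have : i \notin pat x by rewrite Hx inE.
    by rewrite inE => /par_eq {1}->; case: (x 0 i == 2).
  - case=> b _ ->; apply/eqP/setP=> i; rewrite !inE mxE.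
    by case: (b 0 i).
by rewrite card_imset // cardsT card_mx card_bool mul1n.
Qed.

Lemma pat_add0 n (x y : 'rV[Z4]_n) : pat y = set0 -> pat (x + y) = pat x.
Proof. by move=> Hy; apply/setP=> i; rewrite patD Hy in_set0 addbF. Qed.

Lemma CS_split n (v : 'rV[Z4]_n) :
  CS (pat v) = Ev n :|: [set v + y | y in Ev n].
Proof.
apply/setP=> x; rewrite !inE; apply/idP/idP.
- case/orP=> [->//|/eqP Hx]; apply/orP; right; apply/imsetP.
  exists (x - v); last by rewrite addrC subrK.
  rewrite inE; apply/eqP/setP=> i; rewrite patD patN Hx inE.
  by rewrite in_set0 addbb.
- case/orP=> [->//|/imsetP [y]]; rewrite inE => /eqP Hy ->.
  by rewrite pat_add0 // eqxx orbT.
Qed.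

Lemma card_CSp n (v : 'rV[Z4]_n) : pat v != set0 -> #|CS (pat v)| = (2 ^ n.+1)%N.
Proof.
move=> Hv; rewrite CS_split cardsU card_imset; last exact: addrI.
have -> : Ev n :&: [set v + y | y in Ev n] = set0.
  apply/setP=> x; rewrite !inE; apply/andP=> [[/eqP Hx /imsetP [y]]].
  rewrite inE => /eqP Hy Exy; move: Hv; rewrite -(pat_add0 v Hy) -Exy Hx.
  by rewrite eqxx.
by rewrite cards0 subn0 card_Ev expnS mul2n addnn.
Qed.

Definition vecA n (A : {set 'I_n}) : 'rV[Z4]_n := \row_i (if i \in A then 1 else 0).
Lemma pat_vecA n (A : {set 'I_n}) : pat (vecA A) = A.
Proof. by apply/setP=> i; rewrite !inE mxE; case: (i \in A). Qed.

Lemma card_CS n (A : {set 'I_n}) : A != set0 -> #|CS A| = (2 ^ n.+1)%N.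
Proof. by move=> HA; rewrite -{1}(pat_vecA A) card_CSp // pat_vecA. Qed.

Lemma CS_code n (A : {set 'I_n}) : is_code (CS A).
Proof.
apply/and3P; split.
- by rewrite inE pat0 eqxx.
- apply/forall_inP=> x; rewrite inE => Hx; apply/forall_inP=> y; rewrite inE => Hy.
  rewrite inE.
  case/orP: Hx => /eqP Hx; case/orP: Hy => /eqP Hy.
  + by rewrite pat_add0 // Hx eqxx.
  + by rewrite addrC pat_add0 // Hy eqxx orbT.
  + by rewrite pat_add0 // Hx eqxx orbT.
  + apply/orP; left; apply/eqP/setP=> i; rewrite patD Hx Hy inE.
    by case: (i \in A).
- apply/forallP=> a; apply/forall_inP=> x; rewrite !inE patZ.
  by case: (par a); rewrite ?eqxx.
Qed.

Lemma tors_pat n (x : 'rV[Z4]_n) : (x *+ 2 == 0) = (pat x == set0).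
Proof.
apply/idP/idP => [/eqP/rowP H|/eqP/setP H].
- apply/eqP/setP=> i; move: (H i); rewrite mulr2n !mxE -mulr2n => /eqP.
  by rewrite par2 !inE => /negbTE.
- apply/eqP/rowP=> i; move: (H i); rewrite mulr2n !inE !mxE -mulr2n.
  by move=> Hp; apply/eqP; rewrite par2 Hp.
Qed.

Lemma pow_lem n : (0 < n)%N -> (4 ^ 1 * 2 ^ (n - 1) = 2 ^ n.+1)%N.
Proof. by case: n => // m _; rewrite subn1 /= !expnS mulnA. Qed.

Lemma tors_Ev n (C : {set 'rV[Z4]_n}) : two_torsion C = C :&: Ev n.
Proof. by apply/setP=> x; rewrite !inE tors_pat. Qed.

Lemma CS_type n (A : {set 'I_n}) : (0 < n)%N -> A != set0 -> has_type (CS A) 1 (n - 1).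
Proof.
move=> Hn HA; apply/andP; split.
- by rewrite card_CS //; case: n Hn {A HA} => // m _; rewrite subn1 /= !expnS mulnA.
- rewrite tors_Ev (setIidPr _) ?card_Ev ?subnKC //.
  by apply/subsetP=> x; rewrite !inE => ->.
Qed.

Lemma code_char n (C : {set 'rV[Z4]_n}) : (0 < n)%N -> is_code C -> has_type C 1 (n - 1) ->
  exists2 A, A != set0 & C = CS A.
Proof.
move=> Hn /and3P [C0 /forall_inP Cadd Cscal] /andP [/eqP cC /eqP tC].
have cC' : #|C| = (2 ^ n.+1)%N.
  by rewrite cC pow_lem.
have EC : Ev n \subset C.
  have : C :&: Ev n == Ev n by rewrite eqEcard subsetIr -tors_Ev tC card_Ev add1n subn1 prednK ?leqnn.
  by move/eqP <-; apply: subsetIl.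
have [v vC vE] : exists2 v, v \in C & v \notin Ev n.
  apply/exists_inP; apply: contraTT (leqnn #|C|); rewrite negb_exists_in => /forall_inP H.
  have : C \subset Ev n by apply/subsetP=> x xC; move: (H x xC); rewrite negbK.
  move/subset_leq_card; rewrite cC' card_Ev => H1; rewrite -ltnNge.
  apply: (leq_ltn_trans H1); by rewrite expnS mul2n -addnn -[X in (X < _)%N]addn0 ltn_add2l expn_gt0.
exists (pat v); first by move: vE; rewrite inE.
apply/esym/eqP; rewrite eqEcard card_CSp ?cC' ?leqnn ?andbT; last by move: vE; rewrite inE.
rewrite CS_split subUset EC /=; apply/subsetP=> x /imsetP [y yE ->].
by move: (Cadd v vC) => /forall_inP; apply; apply: (subsetP EC).
Qed.

Lemma pat_map n (s : 'S_n) e (x : 'rV[Z4]_n) : pat (code_map s e x) = s @^-1: pat x.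
Proof. by apply/setP=> i; rewrite !inE mxE; case: (e i); rewrite ?parN. Qed.

Lemma code_map_inj n (s : 'S_n) e : injective (code_map s e).
Proof.
move=> x y /rowP H; apply/rowP=> j; move: (H (s^-1 j)%g); rewrite !mxE permKV.
by case: (e _) => // /oppr_inj.
Qed.

Lemma CS_map n (A : {set 'I_n}) (s : 'S_n) e : A != set0 ->
  code_map s e @: CS A = CS (s @^-1: A).
Proof.
move=> HA; apply/eqP; rewrite eqEcard card_imset; last exact: code_map_inj.
rewrite !card_CS ?leqnn ?andbT //; last first.
  by rewrite -card_gt0 card_preimset ?card_gt0 //; apply: perm_inj.
apply/subsetP=> y /imsetP [x]; rewrite !inE => Hx ->; rewrite pat_map.
case/orP: Hx => /eqP ->; last by rewrite eqxx orbT.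
apply/orP; left; apply/eqP/setP=> i; by rewrite !inE.
Qed.

Lemma CS_inj n (A B : {set 'I_n}) : A != set0 -> CS A = CS B -> A = B.
Proof.
move=> HA E; have : vecA A \in CS B by rewrite -E inE pat_vecA eqxx orbT.
by rewrite inE pat_vecA (negbTE HA) /= => /eqP.
Qed.

Lemma perm_exists n (A B : {set 'I_n}) : #|A| = #|B| -> exists s : 'S_n, s @^-1: B = A.
Proof.
move=> cAB.
pose s0 := enum A ++ enum (~: A); pose t0 := enum B ++ enum (~: B).
have ins0 : forall x, x \in s0 by move=> x; rewrite mem_cat !mem_enum inE orbN.
have sz : size s0 = size t0 by rewrite !size_cat -!cardE !cardsC.
have ut : uniq t0.
  rewrite cat_uniq !enum_uniq andbT /=; apply/hasPn=> x; rewrite !mem_enum inE.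
  by move/negbTE ->.
pose f x := nth x t0 (index x s0).
have fi : injective f.
  move=> x y; rewrite /f.
  have ix : (index x s0 < size t0)%N by rewrite -sz index_mem.
  have iy : (index y s0 < size t0)%N by rewrite -sz index_mem.
  rewrite (set_nth_default y) // => /eqP; rewrite nth_uniq // => /eqP Ei.
  by rewrite -(nth_index y (ins0 x)) Ei nth_index.
exists (perm fi); apply/eqP; rewrite eq_sym eqEcard card_preimset ?cAB ?leqnn ?andbT; last exact: perm_inj.
apply/subsetP=> x xA; rewrite inE permE /f.
have xA' : x \in enum A by rewrite mem_enum.
rewrite index_cat xA' nth_cat.
have i1 : (index x (enum A) < size (enum B))%N by rewrite -cardE -cAB cardE index_mem.
by rewrite i1 -(mem_enum (mem B)) mem_nth.
Qed.

Lemma equivCS n (A : {set 'I_n}) (E : {set 'rV[Z4]_n}) : A != set0 ->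
  code_equiv (CS A) E = [exists B : {set 'I_n}, (#|B| == #|A|) && (E == CS B)].
Proof.
move=> HA; apply/idP/idP.
- case/existsP=> s /existsP [e /eqP ->]; apply/existsP; exists (s @^-1: A).
  by rewrite card_preimset ?eqxx ?CS_map //=; apply: perm_inj.
- case/existsP=> B /andP [/eqP cB /eqP ->].
  have [s Hs] := perm_exists cB.
  apply/existsP; exists s; apply/existsP; exists [ffun => false].
  by rewrite CS_map // Hs.
Qed.

Lemma not_triv n (A : {set 'I_n}) : (0 < n)%N -> A != set0 ->
  ~~ [exists D : {set 'rV[Z4]_(n.-1)}, is_code D && code_equiv (CS A) (triv_ext D)].
Proof.
move=> Hn HA; apply/existsP=> [[D /andP [_]]]; rewrite equivCS //.
case/existsP=> B /andP [_ /eqP E].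
have lt : (n.-1 < n)%N by rewrite prednK.
pose l := Ordinal lt.
pose y : 'rV[Z4]_n := \row_i (if i == l then 2 else 0).
have : y \in CS B.
  rewrite inE; apply/orP; left; apply/eqP/setP=> i; rewrite !inE mxE.
  by case: (i == l).
rewrite -E => /imsetP [c _] /rowP /(_ l); rewrite !mxE eqxx insubF //=.
by rewrite ltnn.
Qed.

Definition Cls n (m : nat) : {set {set 'rV[Z4]_n}} :=
  [set E | [exists B : {set 'I_n}, (#|B| == m) && (E == CS B)]].

Definition Sk n (k : 'I_n) : {set 'I_n} := [set widen_ord (ltn_ord k) j | j : 'I_k.+1].

Lemma card_Sk n (k : 'I_n) : #|Sk k| = k.+1.
Proof.
rewrite card_imset ?card_ord //.
by move=> a b /(congr1 val) /= /val_inj.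
Qed.

Lemma Sk_ne n (k : 'I_n) : Sk k != set0.
Proof. by rewrite -card_gt0 card_Sk. Qed.

Lemma cls_CS n (A : {set 'I_n}) : A != set0 ->
  [set D | code_equiv (CS A) D] = Cls n #|A|.
Proof. by move=> HA; apply/setP=> D; rewrite !inE equivCS. Qed.

Lemma Cls_inj n : injective (fun k : 'I_n => Cls n k.+1).
Proof.
move=> k k' /= H.
have : CS (Sk k') \in Cls n k'.+1 by rewrite inE; apply/existsP; exists (Sk k'); rewrite card_Sk !eqxx.
rewrite -H inE => /existsP [B /andP [/eqP cB /eqP E]].
have := CS_inj (Sk_ne k') E => EB.
by apply/val_inj; apply/eqP; rewrite -eqSS -cB -EB card_Sk.
Qed.

Theorem mainTheorem5 (n : nat) (hn : (0 < n)%N) : Nprime n 1 (n - 1) = n.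
Proof.
rewrite /Nprime.
match goal with |- context [pred_of_set ?X] => have -> : X = [set Cls n k.+1 | k : 'I_n] end.
  apply/setP=> X; apply/imsetP/imsetP.
  - case=> C; rewrite inE => /and3P [Cc Ct _] ->.
    have [A HA ->] := code_char hn Cc Ct.
    have cA : (#|A|.-1 < n)%N.
      rewrite prednK ?card_gt0 //; apply: leq_trans (max_card _) _; by rewrite card_ord.
    exists (Ordinal cA) => //=; rewrite prednK ?card_gt0 //; exact: cls_CS.
  - case=> k _ ->; exists (CS (Sk k)).
      by rewrite inE CS_code CS_type ?Sk_ne // not_triv ?Sk_ne.
    by rewrite cls_CS ?Sk_ne // card_Sk.
by rewrite card_imset ?card_ord //; exact: Cls_inj.
Qed.
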